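(* Let $\boldsymbol{x}\in\mathbb{R}^d$ be a random vector with distribution $p(\boldsymbol{x})$ and let $\boldsymbol{z}\sim\mathcal N(\mathbf 0,\mathbf I)$ be independent of $\boldsymbol{x}$. Let $\{S_j\}_{j=1}^k$ be a partition of the index set $\{1,\dots,d\}$, and for each $j$ let $0\le t_{\text{start}_j}<t_{\text{end}_j}$ be given such that the intervals $[t_{\text{start}_j},t_{\text{end}_j}]$ for different $j$ do not overlap. Let $\mathbf A(t)$ be the diagonal $d\times d$ matrix whose $i$-th diagonal entry, for $i\in S_j$, is $$\mathbf A(t)_{ii}=\begin{cases}1, & 0\le t\le t_{\text{start}_j},\\ \dfrac{t-t_{\text{end}_j}}{t_{\text{start}_j}-t_{\text{end}_j}}, & t_{\text{start}_j}<t\le t_{\text{end}_j},\\ 0, & t>t_{\text{end}_j},\end{cases}$$ and set $\boldsymbol{x}_t=\mathbf A(t)\boldsymbol{x}+(\mathbf I-\mathbf A(t))\boldsymbol{z}$. Let $\boldsymbol{x}_{\boldsymbol\theta^*}(\boldsymbol{x}_t,t)=\mathbb E[\boldsymbol{x}\mid \boldsymbol{x}_t]$ denote the optimal denoiser (the minimizer over functions $\boldsymbol{x}_{\boldsymbol\theta}$ of $\mathbb E\|\boldsymbol{x}-\boldsymbol{x}_{\boldsymbol\theta}(\boldsymbol{x}_t,t)\|_2^2$), viewed as a function of $\boldsymbol{x}_t$. Then for every $t$ and every group index $j$ with $t_{\text{end}_j}<t$, we have $\frac{\partial}{\partial(\boldsymbol{x}_t)_i}\boldsymbol{x}_{\boldsymbol\theta^*}(\boldsymbol{x}_t,t)=\mathbf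 0$ for all $i\in S_j$.
   Context: This is the ''groupwise diffusion'' forward process: each group $S_j$ of coordinates of the data is linearly interpolated to independent Gaussian noise during its own time interval $[t_{\text{start}_j},t_{\text{end}_j}]$, and remains data before and pure noise after that interval. $(\boldsymbol{x}_t)_i$ denotes the $i$-th coordinate of $\boldsymbol{x}_t$. *)

(* Defs.v *)
From HB Require Import structures.
From mathcomp Require Import all_boot all_order all_algebra.
From mathcomp Require Import all_classical all_reals all_analysis.
Set Implicit Arguments. Unset Strict Implicit. Unset Printing Implicit Defensive.
Import Order.TTheory GRing.Theory Num.Theory numFieldNormedType.Exports.
Local Open Scope classical_set_scope.
Local Open Scope ring_scope.

(* Borel sigma-algebra on R^d = 'rV[R]_d : generated by the coordinate maps
   (this is the Borel sigma-algebra of R^d). *)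
Definition rV_borel (R : realType) (d : nat) : set (set 'rV[R]_d) :=
  g_sigma_preimage (fun (i : 'I_d) (v : 'rV[R]_d) => v ord0 i).

Definition rV_measurable_fun (R : realType) (d : nat)
    (g : 'rV[R]_d -> 'rV[R]_d) : Prop :=
  forall (i : 'I_d) (B : set R), measurable B ->
    rV_borel ((fun v => g v ord0 i) @^-1` B).

Definition random_vector (R : realType) (d0 : measure_display)
    (Omega : measurableType d0) (d : nat) (X : Omega -> 'rV[R]_d) : Prop :=
  forall i : 'I_d, measurable_fun setT (fun w => X w ord0 i).

Definition group_coef (R : realType) (ts te t : R) : R :=
  if t <= ts then 1 else if t <= te then (t - te) / (ts - te) else 0.

(* Groupwise forward process: grp i is the index j of the group S_j
   containing coordinate i; x_t = A(t) x + (I - A(t)) z. *)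
Definition groupwise_xt (R : realType) (d0 : measure_display)
    (Omega : measurableType d0) (d k : nat) (grp : 'I_d -> 'I_k)
    (ts te : 'I_k -> R) (x z : Omega -> 'rV[R]_d) (t : R) (w : Omega)
    : 'rV[R]_d :=
  \row_i (group_coef (ts (grp i)) (te (grp i)) t * x w ord0 i
          + (1 - group_coef (ts (grp i)) (te (grp i)) t) * z w ord0 i).

Definition mse (R : realType) (d0 : measure_display)
    (Omega : measurableType d0) (P : probability Omega R) (d : nat)
    (x y : Omega -> 'rV[R]_d) (g : 'rV[R]_d -> 'rV[R]_d) : \bar R :=
  (\int[P]_w (\sum_(i < d) (x w ord0 i - g (y w) ord0 i) ^+ 2)%:E)%E.

(* g is an optimal denoiser of x from y: a Borel map minimizing the MSE over
   all Borel maps (i.e. a version of E[x | y], as a function of y). *)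
Definition optimal_denoiser (R : realType) (d0 : measure_display)
    (Omega : measurableType d0) (P : probability Omega R) (d : nat)
    (x y : Omega -> 'rV[R]_d) (g : 'rV[R]_d -> 'rV[R]_d) : Prop :=
  rV_measurable_fun g /\
  forall h, rV_measurable_fun h -> (mse P x y g <= mse P x y h)%E.

(* z ~ N(0, I) and z independent of x: the joint law of (x, z_1, ..., z_d)
   is law(x) (x) N(0,1)^{(x) d}. *)
Definition std_gaussian_indep (R : realType) (d0 : measure_display)
    (Omega : measurableType d0) (P : probability Omega R) (d : nat)
    (x z : Omega -> 'rV[R]_d) : Prop :=
  forall (A : set 'rV[R]_d) (B : 'I_d -> set R),
    rV_borel A -> (forall i, measurable (B i)) ->
    P [set w | A (x w) /\ forall i, B i (z w ord0 i)] =
    (P (x @^-1` A) * \prod_(i < d) normal_prob 0 1 (B i))%E.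

(* Main.v *)
Require Import Defs.
From HB Require Import structures.
From mathcomp Require Import all_boot all_order all_algebra.
From mathcomp Require Import all_classical all_reals all_analysis.
Import Order.TTheory GRing.Theory Num.Theory numFieldNormedType.Exports.
Local Open Scope classical_set_scope.
Local Open Scope ring_scope.
Set Implicit Arguments. Unset Strict Implicit. Unset Printing Implicit Defensive.
From mathcomp Require Import measurable_realfun ring.
Definition setc (R : realType) (d : nat) (i : 'I_d) (u : R) (y : 'rV[R]_d) : 'rV[R]_d :=
  \row_l (if l == i then u else y ord0 l).

Section RV.
Variables (R : realType) (d : nat).
Definition rV_gen : set (set 'rV[R]_d) :=
  \big[setU/set0]_(i < d) preimage_set_system setT (fun v : 'rV[R]_d => v ord0 i) measurable.
Definition rVm := g_sigma_algebraType rV_gen.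

Lemma measurable_coord (k : 'I_d) : measurable_fun setT (fun v : rVm => v ord0 k).
Proof.
move=> _ Y mY; rewrite setTI; apply: sub_sigma_algebra => /=.
rewrite /rV_gen -bigcup_seq/=; exists k => /=; first by rewrite mem_index_enum.
by exists Y => //; rewrite setTI.
Qed.

Lemma measurable_rV dT (T : measurableType dT) (F : T -> rVm) :
  (forall k, measurable_fun setT (fun t => F t ord0 k)) -> measurable_fun setT F.
Proof.
move=> mF; apply: (@measurability _ _ T rVm setT F rV_gen) => //.
move=> _ [A + <-]; rewrite /rV_gen -bigcup_seq => -[k _ [B mB <-]].
rewrite !setTI; have := mF k measurableT B mB; rewrite setTI.
by [].
Qed.

Lemma rV_mfunP (h : 'rV[R]_d -> 'rV[R]_d) : rV_measurable_fun h <->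
  forall k, measurable_fun setT (fun v : rVm => h v ord0 k).
Proof.
split=> H k.
- by move=> _ B mB; rewrite setTI; exact: H.
- by move=> B mB; have := H k measurableT B mB; rewrite setTI.
Qed.

Lemma measurable_forall_ord dT (T : measurableType dT) (Q : 'I_d -> set T) :
  (forall k, measurable (Q k)) -> measurable [set w | forall k, Q k w].
Proof.
move=> mQ; have -> : [set w | forall k, Q k w] = \bigcap_(k in setT) Q k.
  by apply/seteqP; split=> w /= H k //; apply: H.
apply: fin_bigcap_measurable => //; exact: finite_setT.
Qed.

Lemma derive_const_dir (g : 'rV[R]_d -> 'rV[R]_d) (y v : 'rV[R]_d) :
  (forall r : R, g (r *: v + y) = g y) -> derivable g y v /\ 'D_v g y = 0.
Proof.
move=> H.
have E : (fun h : R => h^-1 *: ((g \o shift y) (h *: v) - g y)) = cst 0.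
  by apply/funext => h /=; rewrite H subrr scaler0.
rewrite /derivable /derive E; split; first exact: is_cvg_cst.
by rewrite lim_cst.
Qed.

Lemma setc_meas_rV (i : 'I_d) (c : R) : measurable_fun setT (fun y : rVm => (setc i c y : rVm)).
Proof.
apply: measurable_rV => l.
have -> : (fun y : rVm => setc i c y ord0 l) =
    if l == i then cst c else (fun y : rVm => y ord0 l).
  by apply/funext => y; rewrite mxE; case: ifP.
case: ifP => _; [exact: measurable_cst|exact: measurable_coord].
Qed.

Lemma hc_meas (i : 'I_d) (c : R) h : rV_measurable_fun h ->
  rV_measurable_fun (fun y => h (setc i c y)).
Proof.
move/rV_mfunP => mh; apply/rV_mfunP => k.
exact: measurableT_comp (mh k) (setc_meas_rV i c).
Qed.

Lemma setc_same (i : 'I_d) (c u : R) (y : 'rV[R]_d) : setc i c (setc i u y) = setc i c y.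
Proof. by apply/rowP => m; rewrite !mxE; case: eqP. Qed.

Lemma setc_comm (i l : 'I_d) (c u : R) (y : 'rV[R]_d) : i != l ->
  setc i c (setc l u y) = setc l u (setc i c y).
Proof.
move=> il; apply/rowP => m; rewrite /setc !mxE.
have [mi|mi] := eqVneq m i.
  by subst m; rewrite (negbTE il).
by [].
Qed.

Lemma shift_setc (i : 'I_d) (r : R) (y : 'rV[R]_d) :
  r *: delta_mx ord0 i + y = setc i (r + y ord0 i) y.
Proof.
apply/rowP => m; rewrite /setc !mxE /=.
have [->|mi] := eqVneq m i; first by rewrite mulr1.
by rewrite mulr0 add0r.
Qed.

End RV.
Lemma exists_of_int_eq d (T : measurableType d) (R : realType) (mu : probability T R)
  (phi : T -> \bar R) (M : R) : (0 <= M)%R ->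
  measurable_fun setT phi -> (forall c, (M%:E <= phi c)%E) ->
  (\int[mu]_c phi c = M%:E)%E -> exists c, phi c = M%:E.
Proof.
move=> M0 mphi phiM intM.
pose psi c := (phi c - M%:E)%E.
have psi0 c : (0 <= psi c)%E by rewrite /psi sube_ge0 ?fin_numE //=; exact: phiM.
have mpsi : measurable_fun setT psi.
  by apply: emeasurable_funB => //; exact: measurable_cst.
have Hint : (\int[mu]_c psi c = 0)%E.
  have H : (\int[mu]_c (psi c + (cst M%:E) c) = \int[mu]_c psi c + M%:E)%E.
    rewrite ge0_integralD //; try (by move=> c _; rewrite /= lee_fin);
      try (exact: measurable_cst).
    rewrite integral_cst // [X in (_ * X)%E](_ : _ = 1%E) ?mule1 //; exact: probability_setT.
  have H2 : (\int[mu]_c (psi c + (cst M%:E) c) = M%:E)%E.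
    rewrite -[RHS]intM; apply: eq_integral => c _; exact: subeK.
  have := congr1 (fun e => e - M%:E)%E (etrans (esym H) H2).
  by rewrite /= addeK // subee.
have : ae_eq mu setT psi (cst 0%E).
  apply/ae_eq_integral_abs => //.
  by rewrite -Hint; apply: eq_integral => c _; rewrite gee0_abs.
case=> N0 [mN0 N00 sub].
apply: contrapT => /forallNP H.
have : setT `<=` N0.
  move=> c _; apply: sub => /= /(_ I) psic0; apply: (H c).
  by rewrite -(subeK (phi c) (_ : M%:E \is a fin_num)) // -/(psi c) psic0 add0e.
move=> sT.
have H1 : (mu setT <= mu N0)%E by apply: le_measure => //; rewrite inE.
move: H1; rewrite [X in (X <= _)%E](_ : _ = 1%E); last exact: probability_setT.
rewrite [X in (_ <= X)%E](_ : _ = 0%E); last exact: N00.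
by rewrite lee_fin ler10.
Qed.
Section Uniq.
Variables (R : realType) (d0 : measure_display) (Omega : measurableType d0)
  (P : probability Omega R) (d : nat) (x Y : Omega -> 'rV[R]_d).
Hypothesis rvx : random_vector x.
Hypothesis rvY : forall l, measurable_fun setT (fun w => Y w ord0 l).

Definition F (h : 'rV[R]_d -> 'rV[R]_d) w := \sum_(k < d) (x w ord0 k - h (Y w) ord0 k) ^+ 2.

Lemma F_ge0 h w : 0 <= F h w.
Proof. by apply: sumr_ge0 => k _; exact: sqr_ge0. Qed.

Lemma Y_meas : measurable_fun setT (Y : Omega -> rVm R d).
Proof. exact: measurable_rV. Qed.

Lemma hY_meas h : rV_measurable_fun h -> forall k,
  measurable_fun setT (fun w => h (Y w) ord0 k).
Proof. by move/rV_mfunP => mh k; exact: measurableT_comp (mh k) Y_meas. Qed.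

Lemma F_meas h : rV_measurable_fun h -> measurable_fun setT (fun w => (F h w)%:E).
Proof.
move=> mh; apply/measurable_EFinP; apply: measurable_sum => k.
apply: measurable_funX; apply: measurable_funB; [exact: rvx|exact: hY_meas].
Qed.

Lemma uniq_opt f g : optimal_denoiser P x Y f -> optimal_denoiser P x Y g ->
  (mse P x Y f < +oo)%E -> {ae P, forall w, f (Y w) = g (Y w)}.
Proof.
case=> mf optf; case=> mg optg fin.
pose m y : 'rV[R]_d := \row_k ((f y ord0 k + g y ord0 k) / 2).
have mm : rV_measurable_fun m.
  apply/rV_mfunP => k.
  have -> : (fun v : rVm R d => m v ord0 k) = (fun v => (f v ord0 k + g v ord0 k) / 2).
    by apply/funext => v; rewrite mxE.
  apply: measurable_funM => //; apply: measurable_funD.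
    by move/rV_mfunP : mf; apply.
  by move/rV_mfunP : mg; apply.
pose Dw w := \sum_(k < d) (f (Y w) ord0 k - g (Y w) ord0 k) ^+ 2.
have Dw0 w : 0 <= Dw w by apply: sumr_ge0 => k _; exact: sqr_ge0.
have mD : measurable_fun setT (fun w => (Dw w)%:E).
  apply/measurable_EFinP; apply: measurable_sum => k.
  by apply: measurable_funX; apply: measurable_funB; exact: hY_meas.
have keyeq w : F f w + F g w = 2 * F m w + 2^-1 * Dw w.
  rewrite /F /Dw -big_split /= mulr_sumr mulr_sumr -big_split /=.
  by apply: eq_bigr => k _; rewrite mxE; field.
have E : (mse P x Y f + mse P x Y g =
    2%:E * mse P x Y m + 2^-1%:E * \int[P]_w (Dw w)%:E)%E.
  have Fm := F_meas; have F0 := F_ge0.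
  rewrite /mse -ge0_integralD //; try (exact: F_meas);
    try (by move=> ? _; rewrite lee_fin F_ge0).
  rewrite -ge0_integralZl //; try (exact: F_meas);
    try (by move=> ? _; rewrite lee_fin F_ge0).
  rewrite -ge0_integralZl //; try (by rewrite lee_fin invr_ge0);
    try (by move=> ? _; rewrite lee_fin).
  rewrite -ge0_integralD //; try (by move=> ? _; rewrite -EFinM lee_fin mulr_ge0 // ?invr_ge0 ?F_ge0);
    try (by apply: measurable_funeM; exact: F_meas); try (by apply: measurable_funeM).
  by apply: eq_integral => t0 _; rewrite -!EFinM -!EFinD keyeq.
have Efg : mse P x Y f = mse P x Y g by apply/le_anti; rewrite optf // optg.
have M0 : (0 <= mse P x Y f)%E.
  by apply: integral_ge0 => t0 _; rewrite lee_fin F_ge0.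
have fM : mse P x Y f \is a fin_num by rewrite ge0_fin_numE.
have Mm := optf m mm.
set Iint := (\int[P]_w (Dw w)%:E)%E in E.
have I0 : (0 <= Iint)%E by apply: integral_ge0 => t0 _; rewrite lee_fin.
rewrite -Efg -(fineK fM) in E Mm.
set r := fine (mse P x Y f) in E Mm.
have HI : (2^-1%:E * Iint <= 0)%E.
  have : ((2 * r)%:E + 2^-1%:E * Iint <= (2 * r)%:E + 0)%E.
    rewrite adde0 [X in (_ <= X)%E](_ : _ = r%:E + r%:E); last first.
      by rewrite -EFinD -mulr2n mulr_natl.
    rewrite E; apply: leeD2r; rewrite EFinM; exact: lee_wpmul2l.
  by rewrite leeD2lE.
have I00 : Iint = 0%E.
  apply/le_anti; rewrite I0 andbT.
  by rewrite -(pmule_rle0 _ (_ : 0 < 2^-1%:E)%E) // lte_fin invr_gt0.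
have Hae : ae_eq P setT (fun w => (Dw w)%:E) (cst 0%E).
  apply/(ae_eq_integral_abs _ measurableT) => //.
  rewrite -[RHS]I00; apply: eq_integral => t0 _; rewrite gee0_abs // lee_fin.
  exact: Dw0.
apply: filterS Hae => t0 /(_ I) [] H0.
apply/rowP => k.
have Hk : (f (Y t0) ord0 k - g (Y t0) ord0 k) ^+ 2 = 0.
  by apply: (psumr_eq0P _ H0) => // k0 _; exact: sqr_ge0.
by move/eqP: Hk; rewrite sqrf_eq0 subr_eq0 => /eqP.
Qed.

End Uniq.

Section Main.
Variables (R : realType) (d0 : measure_display) (Omega : measurableType d0)
  (P : probability Omega R) (d : nat) (x z : Omega -> 'rV[R]_d).
Hypotheses (rvx : random_vector x) (rvz : random_vector z).
Hypothesis indep : std_gaussian_indep P x z.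
Variable (Y : Omega -> 'rV[R]_d) (cf : 'I_d -> R).
Hypothesis Ydef : forall w l, Y w ord0 l = cf l * x w ord0 l + (1 - cf l) * z w ord0 l.
Variable i : 'I_d.
Hypothesis Yi : forall w, Y w ord0 i = z w ord0 i.

Local Notation N := (normal_prob (0:R) 1).

Definition Pi : set (set Omega) := [set E | exists (A : set 'rV[R]_d) (B : 'I_d -> set R),
  rV_borel A /\ (forall k, measurable (B k)) /\ B i = setT /\
  E = [set w | A (x w) /\ forall k, B k (z w ord0 k)]].

Local Notation OmG := (g_sigma_algebraType Pi).
Local Notation RN := (g_sigma_algebraType (R.-ocitv.-measurable)).

Lemma x_meas : measurable_fun setT (x : Omega -> rVm R d).
Proof. exact: measurable_rV. Qed.

Lemma Pi_meas E : Pi E -> measurable E.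
Proof.
move=> [A [B [mA [mB [_ ->]]]]].
have -> : [set w | A (x w) /\ forall k, B k (z w ord0 k)] =
  (x @^-1` A) `&` [set w | forall k, B k (z w ord0 k)] by [].
apply: measurableI.
  by have := x_meas measurableT mA; rewrite setTI.
apply: measurable_forall_ord => k.
by have := rvz k measurableT (mB k); rewrite setTI.
Qed.

Lemma Pi_setI : setI_closed Pi.
Proof.
move=> _ _ [A1 [B1 [mA1 [mB1 [B1i ->]]]]] [A2 [B2 [mA2 [mB2 [B2i ->]]]]].
exists (A1 `&` A2), (fun k => B1 k `&` B2 k); split.
  exact: (@measurableI _ (rVm R d)).
split; first by move=> k; exact: measurableI.
split; first by rewrite B1i B2i setIT.
apply/seteqP; split=> w /=.
  by move=> [[a1 b1] [a2 b2]]; split; [split|move=> k; split; [exact: b1|exact: b2]].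
by move=> [[a1 a2] b]; split; split => // k; have [] := b k.
Qed.

Lemma Pi_setT : Pi setT.
Proof.
exists setT, (fun _ => setT); split; first exact: (@measurableT _ (rVm R d)).
split => //; split => //.
by apply/seteqP; split => w.
Qed.

Definition idG : Omega -> OmG := fun w => w.

Lemma idG_meas : measurable_fun setT idG.
Proof.
apply: (@measurability _ _ Omega OmG setT idG Pi) => //.
by move=> _ [E PiE <-]; rewrite setTI; exact: Pi_meas.
Qed.

Lemma OmG_meas (A : set OmG) : measurable A -> measurable (A : set Omega).
Proof. by move=> mA; have := idG_meas measurableT mA; rewrite setTI. Qed.

Lemma xG_meas k : measurable_fun setT (fun w : OmG => x w ord0 k).
Proof.
move=> _ B mB; rewrite setTI; apply: sub_sigma_algebra.
exists ((fun v : 'rV[R]_d => v ord0 k) @^-1` B), (fun _ => setT); split.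
  by have := measurable_coord k measurableT mB; rewrite setTI.
split => //; split => //.
by apply/seteqP; split => w /=; [move=> ?; split|case].
Qed.

Lemma zG_meas l : l != i -> measurable_fun setT (fun w : OmG => z w ord0 l).
Proof.
move=> li _ B mB; rewrite setTI; apply: sub_sigma_algebra.
exists setT, (fun m => if m == l then B else setT); split.
  exact: (@measurableT _ (rVm R d)).
split; first by move=> m; case: ifP.
split; first by rewrite eq_sym (negbTE li).
apply/seteqP; split => w /=.
  by move=> Bz; split => // m; case: eqP => // ->.
by case=> _ /(_ l); rewrite eqxx.
Qed.

Lemma YG_meas l : l != i -> measurable_fun setT (fun w : OmG => Y w ord0 l).
Proof.
move=> li.
have -> : (fun w : OmG => Y w ord0 l) =
  (fun w => cf l * x w ord0 l + (1 - cf l) * z w ord0 l).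
  by apply/funext => w; rewrite Ydef.
apply: measurable_funD; apply: measurable_funM => //.
  exact: xG_meas.
exact: zG_meas.
Qed.

Lemma setc_meas : measurable_fun setT (fun p : OmG * RN => (setc i p.2 (Y p.1) : rVm R d)).
Proof.
apply: measurable_rV => l.
have [->|li] := eqVneq l i.
  have -> : (fun p : OmG * RN => setc i p.2 (Y p.1) ord0 i) = snd.
    by apply/funext => p; rewrite mxE eqxx.
  exact: measurable_snd.
have -> : (fun p : OmG * RN => setc i p.2 (Y p.1) ord0 l) = (fun w => Y w ord0 l) \o fst.
  by apply/funext => p; rewrite mxE (negbTE li).
exact: measurableT_comp (YG_meas li) measurable_fst.
Qed.

Definition Phi (h : 'rV[R]_d -> 'rV[R]_d) (p : OmG * RN) : \bar R :=
  (\sum_(k < d) (x p.1 ord0 k - h (setc i p.2 (Y p.1)) ord0 k) ^+ 2)%:E.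

Lemma Phi_meas h : rV_measurable_fun h -> measurable_fun setT (Phi h).
Proof.
move/rV_mfunP => mh; apply/measurable_EFinP; apply: measurable_sum => k.
apply: measurable_funX; apply: measurable_funB.
  exact: measurableT_comp (xG_meas k) measurable_fst.
exact: measurableT_comp (mh k) setc_meas.
Qed.

Lemma Phi_ge0 h p : (0 <= Phi h p)%E.
Proof. by rewrite lee_fin; apply: sumr_ge0 => k _; exact: sqr_ge0. Qed.


HB.instance Definition _ := isMeasurableFun.Build _ _ _ _ idG idG_meas.
Local Notation PG := (distribution P idG).

Definition psi (w : Omega) : (OmG * RN)%type := (idG w, z w ord0 i).
Lemma psi_meas : measurable_fun setT psi.
Proof. by apply: measurable_fun_pair; [exact: idG_meas|exact: (rvz i)]. Qed.
HB.instance Definition _ := isMeasurableFun.Build _ _ _ _ psi psi_meas.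
Local Notation Dpsi := (distribution P psi).

Lemma indep_gen (A : set 'rV[R]_d) (B : 'I_d -> set R) :
  rV_borel A -> (forall k, measurable (B k)) -> B i = setT ->
  forall C : set R, measurable C ->
  P ([set w | A (x w) /\ forall k, B k (z w ord0 k)] `&` [set w | C (z w ord0 i)]) =
  (P [set w | A (x w) /\ forall k, B k (z w ord0 k)] * N C)%E.
Proof.
move=> mA mB Bi C mC.
pose B' k := if k == i then C else B k.
have -> : [set w | A (x w) /\ forall k, B k (z w ord0 k)] `&` [set w | C (z w ord0 i)] =
    [set w | A (x w) /\ forall k, B' k (z w ord0 k)].
  apply/seteqP; split => w /=.
  - move=> [[Ax Bz] Cz]; split => // k; rewrite /B'; case: eqP => [->|_] //.
  - move=> [Ax Bz]; split; last by have := Bz i; rewrite /B' eqxx.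
    split => // k; have := Bz k; rewrite /B'; case: eqP => [->|//] _.
    by rewrite Bi.
have mB' : forall k, measurable (B' k) by move=> k; rewrite /B'; case: ifP.
rewrite (indep mA mB') (indep mA mB).
rewrite (bigD1 i) //= [X in _ = (_ * X * _)%E](bigD1 i) //= /B' eqxx Bi probability_setT mul1e.
rewrite (eq_bigr (fun k => N (B k))); last by move=> k /negbTE ->.
by rewrite [(N C * _)%E]muleC muleA.
Qed.


Lemma PZ (C : set R) : measurable C -> P [set w | C (z w ord0 i)] = N C.
Proof.
move=> mC.
have := @indep_gen setT (fun _ => setT) (@measurableT _ (rVm R d)) (fun _ => measurableT) erefl C mC.
have -> : [set w | setT (x w) /\ forall k : 'I_d, (fun=> setT) k (z w ord0 k)] = setT.
  by apply/seteqP; split => w.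
by rewrite setTI probability_setT mul1e.
Qed.

Lemma measZ (C : set R) : measurable C -> measurable [set w | C (z w ord0 i)].
Proof. by move=> mC; have := rvz i measurableT mC; rewrite setTI. Qed.

Lemma compl_step (C : set R) : measurable C -> forall S : set Omega, measurable S ->
  P (S `&` [set w | C (z w ord0 i)]) = (P S * N C)%E ->
  P (~` S `&` [set w | C (z w ord0 i)]) = (P (~` S) * N C)%E.
Proof.
move=> mC S mS IH.
have mZ := measZ mC.
have fC : N C \is a fin_num by exact: fin_num_measure.
have fS : P S \is a fin_num by exact: fin_num_measure.
rewrite probability_setC //.
have -> : ~` S `&` [set w | C (z w ord0 i)] = [set w | C (z w ord0 i)] `\` S.
  by rewrite setDE setIC.
rewrite measureD //; last by rewrite (le_lt_trans (probability_le1 _ mZ)) ?ltry.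
rewrite [X in (_ - X)%E](_ : _ = (P S * N C)%E); last by rewrite setIC; exact: IH.
rewrite [X in (X - _)%E](_ : _ = N C); last exact: PZ mC.
rewrite -(fineK fS) -(fineK fC) -EFinM -EFinB -EFinB -EFinM.
by congr EFin; rewrite mulrBl mul1r.
Qed.

Lemma union_step (C : set R) : measurable C -> forall F : (set Omega)^nat,
  (forall n, measurable (F n)) -> trivIset setT F ->
  (forall n, P (F n `&` [set w | C (z w ord0 i)]) = (P (F n) * N C)%E) ->
  P ((\bigcup_k F k) `&` [set w | C (z w ord0 i)]) = (P (\bigcup_k F k) * N C)%E.
Proof.
move=> mC F mF tF IH.
have mZ := measZ mC.
have fC : N C \is a fin_num by exact: fin_num_measure.
rewrite setI_bigcupl !measure_semi_bigcup //;
  try (by apply: bigcupT_measurable => n; exact: measurableI);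
  try (exact: trivIset_setIr); try (by move=> n; exact: measurableI);
  try (exact: bigcupT_measurable).
transitivity (\sum_(n <oo) ((fine (N C))%:E * P (F n)))%E.
  by apply: eq_eseriesr => n _; rewrite fineK // muleC; exact: IH.
by rewrite nneseriesZl // fineK // muleC.
Qed.

Lemma indepG (C : set R) : measurable C -> forall S : set OmG, measurable S ->
  P (S `&` [set w | C (z w ord0 i)]) = (P S * N C)%E.
Proof.
move=> mC.
apply: (@dynkin_induction _ OmG Pi (fun S => P (S `&` [set w | C (z w ord0 i)]) = (P S * N C)%E)) => //.
- exact: Pi_setI.
- by rewrite setTI probability_setT mul1e PZ.
- by move=> _ [A [B [mA [mB [Bi ->]]]]]; exact: indep_gen.
- by move=> S mS IH; exact: (compl_step mC (OmG_meas mS) IH).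
- move=> F mF tF IH.
  exact: (union_step mC (fun n => OmG_meas (mF n)) tF IH).
Qed.


Lemma Dpsi_prod (A : set OmG) (B : set RN) : measurable A -> measurable B ->
  Dpsi (A `*` B) = (PG A * N B)%E.
Proof. by move=> mA mB; exact: indepG. Qed.

Lemma Dpsi_eq X : measurable X -> (PG \x N)%E X = Dpsi X.
Proof.
move=> mX; exact: (@product_measure_unique _ _ _ _ _ PG N Dpsi Dpsi_prod X mX).
Qed.

Lemma setc_Y w : setc i (z w ord0 i) (Y w) = Y w.
Proof. by apply/rowP => l; rewrite mxE; case: eqP => [->|//]; rewrite Yi. Qed.

Lemma mse_avg h : rV_measurable_fun h ->
  (\int[N]_c mse P x Y (fun y => h (setc i c y)) = mse P x Y h)%E.
Proof.
move=> mh.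
have mPhi := Phi_meas mh.
have E1 : mse P x Y h = (\int[P]_w (Phi h \o psi) w)%E.
  by apply: eq_integral => w _; rewrite /Phi /= setc_Y.
have E2 : (\int[P]_w (Phi h \o psi) w = \int[Dpsi]_p Phi h p)%E.
  rewrite /distribution (ge0_integral_pushforward psi_meas) //.
  by move=> p _; exact: Phi_ge0.
have E3 : (\int[Dpsi]_p Phi h p = \int[(PG \x N)%E]_p Phi h p)%E.
  by apply: eq_measure_integral => A mA _; exact: (esym (Dpsi_eq mA)).
have E4 := fubini_tonelli2 (Phi h) mPhi (Phi_ge0 h).
rewrite E1 E2 E3 E4; apply: eq_integral => c _.
rewrite /fubini_G /distribution (ge0_integral_pushforward idG_meas) //.
- by apply: measurableT_comp mPhi _; exact: measurable_fun_pair.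
- by move=> w _; exact: Phi_ge0.
Qed.


Lemma mse_hc h : rV_measurable_fun h ->
  (fun c : RN => mse P x Y (fun y => h (setc i c y))) = fubini_G PG (Phi h).
Proof.
move=> mh; have mPhi := Phi_meas mh.
apply/funext => c.
rewrite /fubini_G /distribution (ge0_integral_pushforward idG_meas) //.
- by apply: measurableT_comp mPhi _; exact: measurable_fun_pair.
- by move=> w _; exact: Phi_ge0.
Qed.

Lemma step h : optimal_denoiser P x Y h -> (mse P x Y h < +oo)%E ->
  exists c : R, optimal_denoiser P x Y (fun y => h (setc i c y)).
Proof.
case=> mh opt fin.
have M0 : (0 <= mse P x Y h)%E.
  by apply: integral_ge0 => w _; rewrite lee_fin sumr_ge0 // => k _; exact: sqr_ge0.
have fM : mse P x Y h \is a fin_num by rewrite ge0_fin_numE.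
have [c Hc] : exists c : RN,
    mse P x Y (fun y => h (setc i c y)) = (fine (mse P x Y h))%:E.
  apply: (@exists_of_int_eq _ _ _ N _ _ (fine_ge0 M0)).
  - rewrite (mse_hc mh). exact: (measurable_fun_fubini_tonelli_G (Phi h) (Phi_meas mh) (Phi_ge0 h)).
  - by move=> c; rewrite fineK //; apply: opt; exact: hc_meas.
  - by rewrite fineK //; exact: mse_avg mh.
exists c; split; first exact: hc_meas.
by move=> h' mh'; rewrite Hc fineK //; exact: opt.
Qed.

End Main.
Unset Implicit Arguments.

Theorem proposition3 (R : realType) (d0 : measure_display)
    (Omega : measurableType d0) (P : probability Omega R)
    (d k : nat) (x z : Omega -> 'rV[R]_d)
    (grp : 'I_d -> 'I_k) (ts te : 'I_k -> R) :
  random_vector x -> random_vector z ->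
  std_gaussian_indep P x z ->
  (\int[P]_w (\sum_(i < d) (x w ord0 i) ^+ 2)%:E < +oo)%E ->
  (forall j, 0 <= ts j < te j) ->
  (forall j j', j != j' -> ~ (exists s, ts j < s < te j /\ ts j' < s < te j')) ->
  forall (t : R) (j : 'I_k), te j < t ->
  forall f, optimal_denoiser P x (groupwise_xt grp ts te x z t) f ->
  exists g,
    optimal_denoiser P x (groupwise_xt grp ts te x z t) g /\
    {ae P, forall w, f (groupwise_xt grp ts te x z t w)
                     = g (groupwise_xt grp ts te x z t w)} /\
    forall i : 'I_d, grp i = j -> forall y : 'rV[R]_d,
      derivable g y (delta_mx ord0 i) /\ 'D_(delta_mx ord0 i) g y = 0.
Proof.
move=> rvx rvz indep Hx2 Htse Hdisj t j Htj f Hf.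
set Y := groupwise_xt grp ts te x z t.
pose cf l := group_coef (ts (grp l)) (te (grp l)) t.
have Ydef : forall w l, Y w ord0 l = cf l * x w ord0 l + (1 - cf l) * z w ord0 l.
  by move=> w l; rewrite /Y /groupwise_xt mxE.
have cf0 : forall l, grp l = j -> cf l = 0.
  move=> l gl; rewrite /cf /group_coef gl.
  have /andP[_ tste] := Htse j.
  have -> : (t <= ts j) = false.
    by apply/negbTE; rewrite -ltNge (lt_trans tste Htj).
  have -> : (t <= te j) = false by apply/negbTE; rewrite -ltNge.
  by [].
have Yi : forall l, grp l = j -> forall w, Y w ord0 l = z w ord0 l.
  by move=> l gl w; rewrite Ydef cf0 // mul0r add0r subr0 mul1r.
have rvY : forall l, measurable_fun setT (fun w => Y w ord0 l).
  move=> l; have -> : (fun w => Y w ord0 l) =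
      (fun w => cf l * x w ord0 l + (1 - cf l) * z w ord0 l).
    by apply/funext => w; exact: Ydef.
  by apply: measurable_funD; apply: measurable_funM => //; try exact: rvx; try exact: rvz.
have fin : forall h, optimal_denoiser P x Y h -> (mse P x Y h < +oo)%E.
  move=> h [_ opt]; apply: (le_lt_trans (opt (fun _ : 'rV[R]_d => (0%R : 'rV[R]_d)) _)).
    by apply/rV_mfunP => l; exact: measurable_cst.
  rewrite (_ : mse P x Y (fun _ : 'rV[R]_d => (0%R : 'rV[R]_d)) = \int[P]_w (\sum_(i < d) (x w ord0 i) ^+ 2)%:E)%E //.
  rewrite /mse; apply: eq_integral => w _; congr EFin; apply: eq_bigr => l _.
  by rewrite mxE subr0.
have iter : forall s : seq 'I_d, all (fun l => grp l == j) s ->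
    exists g, optimal_denoiser P x Y g /\
      forall l, l \in s -> forall y u, g (setc l u y) = g y.
  elim => [|l s IH] /=; first by move=> _; exists f; split.
  move=> /andP[/eqP gl /IH [g' [og' inv']]].
  have [c oc] := step rvx rvz indep Ydef (Yi l gl) og' (fin _ og').
  exists (fun y => g' (setc l c y)); split => // l'; rewrite inE => /orP[/eqP ->|l's] y u.
    by rewrite setc_same.
  have [->|ll'] := eqVneq l' l; first by rewrite setc_same.
  by rewrite setc_comm 1?eq_sym // inv'.
have [g [og inv]] := iter [seq l <- enum 'I_d | grp l == j] (filter_all _ _).
exists g; split => //; split.
  exact: (uniq_opt rvx rvY Hf og (fin _ Hf)).
move=> i gi y; apply: derive_const_dir => r.
by rewrite shift_setc inv // mem_filter gi eqxx mem_enum.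
Qed.
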